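(* Let $q$ be a prime power, $m\ge1$, $1\le k\le n$, $g_1,\dots,g_n\in\mathbb{F}_{q^m}$ linearly independent over $\mathbb{F}_q$, $\mathbf g=(g_1,\dots,g_n)$, $C$ the Gabidulin code defined below, $\mathbf r\in\mathbb{F}_{q^m}^n$, and $t:=\min\{d_R(\mathbf c,\mathbf r):\mathbf c\in C\}$. Let $B=\{b^{(1)},b^{(2)}\}$ be a minimal basis of the interpolation module $\mathfrak M(\mathbf r)$ with respect to the $(0,k-1)$-weighted term-over-position order with $\mathrm{lpos}(b^{(i)})=i$ ($i=1,2$), write $b^{(i)}=[b^{(i)}_1\ \ b^{(i)}_2]$, and let $\ell_i$ be the $(0,k-1)$-weighted $q$-degree of $b^{(i)}$. Then $\ell_2\le t+k-1$, or equivalently $\mathrm{qdeg}(b^{(2)}_2)\le t$. Furthermore, $\ell_1=\mathrm{qdeg}(b^{(1)}_1)\ge n-t$.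
   Context: Write $[i]:=q^i$. A $q$-linearized polynomial is $f(x)=\sum_{i=0}^{d}a_ix^{[i]}$, $a_i\in\mathbb{F}_{q^m}$; if $a_d\ne0$, $d=\mathrm{qdeg}(f)$ ($\mathrm{qdeg}(0)=-\infty$). $\mathcal{L}_q(x,q^m)$ is the ring of these under addition and composition $\circ$. $\Pi_{\mathbf g}(x)=\prod_{u\in\langle g_1,\dots,g_n\rangle}(x-u)$ ($\mathbb{F}_q$-span), of $q$-degree $n$. $\Lambda_{\mathbf g,\mathbf r}(x)=\sum_{i=1}^n(-1)^{n-i}r_i\det(\mathfrak D_i(\mathbf g,x))/\det(M_n(g_1,\dots,g_n))$ ($M_n(v_1,\dots,v_s)$ the $n\times s$ matrix with $(j,l)$ entry $v_l^{[j-1]}$; $\mathfrak D_i(\mathbf g,x)$ is $M_n(g_1,\dots,g_n,x)$ without column $i$), with $\Lambda_{\mathbf g,\mathbf r}(g_i)=r_i$. $C=\{(m(g_1),\dots,m(g_n)):m\in\mathcal{L}_q(x,q^m),\ \mathrm{qdeg}(m)<k\}$. $d_R(\mathbf a,\mathbf b)$ is the $\mathbb{F}_q$-rank of the $m\times n$ $\mathbb{F}_q$-matrix obtained by expanding the coordinates of $\mathbf a-\mathbf b$ in a fixed $\mathbb{F}_q$-basis of $\mathbb{F}_{q^m}$. $\mathfrak M(\mathbf r)$ is the set of all $\beta\circ[\Pi_{\mathbf g}\ \ 0]+\gamma\circ[-\Lambda_{\mathbf g,\mathbf r}\ \ x]$, $\beta,\gamma\in\mathcal{L}_q(x,q^m)$,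 with $h\circ[f_1\ f_2]=[h\circ f_1\ \ h\circ f_2]$. Monomials: $x^{[i]}e_j$, $j\in\{1,2\}$. $(0,k-1)$-weighted term-over-position order: $w_1=0,w_2=k-1$, $x^{[i_1]}e_{j_1}<x^{[i_2]}e_{j_2}$ iff $i_1+w_{j_1}<i_2+w_{j_2}$ or (equality and $j_1<j_2$). $\mathrm{lm},\mathrm{lt},\mathrm{lpos}$: greatest monomial, its term, its coordinate. Weighted $q$-degree of $[f_1\ f_2]$: $\max\{\mathrm{qdeg} f_1,\mathrm{qdeg} f_2+k-1\}$. Basis: generating set with $\sum a_i\circ f^{(i)}=0\Rightarrow a_i=0$. $f$ reduces modulo a set $F$ of nonzero elements in one step if $h=f-\sum_i(b_ix^{[a_i]})\circ f^{(i)}$, $f^{(i)}\in F$, $b_i\in\mathbb{F}_{q^m}$, $a_i\ge0$, with $\mathrm{lm}(f)=x^{[a_i]}\circ\mathrm{lm}(f^{(i)})$ and $\mathrm{lt}(f)=\sum_i(b_ix^{[a_i]})\circ\mathrm{lt}(f^{(i)})$; a basis $B$ is minimal if no $b\in B$ can be reduced modulo $B\setminus\{b\}$. *)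

(* Defs.v *)
From HB Require Import structures.
From mathcomp Require Import all_boot all_order all_algebra all_field.
Set Implicit Arguments. Unset Strict Implicit. Unset Printing Implicit Defensive.
Import Order.TTheory GRing.Theory.
Local Open Scope ring_scope.

(* Setting: F = F_q (a finite field, q := #|F|), L = F_{q^m} an extension of
   F of degree m := \dim {:L}.  A q-linearized polynomial is an element of
   {poly L} of the form sum_i a_i X^(q^i); composition is comp_poly. *)

Section Gab.
Variables (F : finFieldType) (L : fieldExtType F).

Definition qq : nat := #|F|.

Definition xq (i : nat) : {poly L} := 'X^(qq ^ i).

Definition linearized (f : {poly L}) : Prop :=
  forall i : nat, f`_i != 0 -> exists j : nat, i = (qq ^ j)%N.

(* q-degree of a nonzero linearized polynomial: size f = q^d + 1.
   (The value at f = 0, i.e. -oo, is never used without a guard.) *)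
Definition qdeg (f : {poly L}) : nat := trunc_log qq (size f).-1.

Definition lpair := ({poly L} * {poly L})%type.
Definition p0 : lpair := (0, 0).
Definition padd (u v : lpair) : lpair := (u.1 + v.1, u.2 + v.2).
Definition pcomp (h : {poly L}) (u : lpair) : lpair := (h \Po u.1, h \Po u.2).
Definition psum (s : seq lpair) : lpair := foldr padd p0 s.

Variable k : nat.

Definition wt (j : nat) : nat := if j == 2%N then (k - 1)%N else 0%N.

(* monomials x^[i] e_j are encoded as pairs (i, j), j in {1,2} *)
Definition mlt (mu nu : nat * nat) : bool :=
  (mu.1 + wt mu.2 < nu.1 + wt nu.2)%N ||
  ((mu.1 + wt mu.2 == nu.1 + wt nu.2) && (mu.2 < nu.2)%N).

Definition comp_of (u : lpair) (j : nat) : {poly L} :=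
  if j == 1%N then u.1 else if j == 2%N then u.2 else 0.

Definition coef_at (u : lpair) (mu : nat * nat) : L :=
  (comp_of u mu.2)`_(qq ^ mu.1).

(* the monomials occurring in u (q^i < size forces i < size) *)
Definition monos (u : lpair) : seq (nat * nat) :=
  [seq mu <- [seq (i, 1%N) | i <- iota 0 (size u.1)] ++
             [seq (i, 2%N) | i <- iota 0 (size u.2)]
     | coef_at u mu != 0].

Definition lm (u : lpair) : nat * nat :=
  let ms := monos u in
  foldr (fun mu acc => if mlt acc mu then mu else acc) (head (0%N, 0%N) ms) ms.

Definition lpos (u : lpair) : nat := (lm u).2.

Definition term (c : L) (mu : nat * nat) : lpair :=
  if mu.2 == 1%N then (c *: xq mu.1, 0)
  else if mu.2 == 2%N then (0, c *: xq mu.1) else p0.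

Definition ltm (u : lpair) : lpair := term (coef_at u (lm u)) (lm u).

(* (0,k-1)-weighted q-degree max{qdeg f1, qdeg f2 + k - 1}, qdeg 0 = -oo
   (u assumed nonzero) *)
Definition wdeg (u : lpair) : nat :=
  if u.2 == 0 then qdeg u.1
  else if u.1 == 0 then (qdeg u.2 + (k - 1))%N
  else maxn (qdeg u.1) (qdeg u.2 + (k - 1)).

Definition reducible (Fs : seq lpair) (f : lpair) : Prop :=
  exists s : seq ((lpair * L) * nat),
    (forall x, x \in s ->
       x.1.1 \in Fs /\ lm f = (x.2 + (lm x.1.1).1, (lm x.1.1).2)%N) /\
    ltm f = psum [seq pcomp (x.1.2 *: xq x.2) (ltm x.1.1) | x <- s].

Definition lincomb (a : seq {poly L}) (B : seq lpair) : lpair :=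
  psum [seq pcomp x.1 x.2 | x <- zip a B].

Definition is_basis (M : lpair -> Prop) (B : seq lpair) : Prop :=
  (forall b, b \in B -> M b) /\
  (forall u, M u -> exists a : seq {poly L},
       size a = size B /\ (forall p, p \in a -> linearized p) /\ u = lincomb a B) /\
  (forall a : seq {poly L}, size a = size B -> (forall p, p \in a -> linearized p) ->
       lincomb a B = p0 -> forall p, p \in a -> p = 0).

Definition minimal_basis (M : lpair -> Prop) (B : seq lpair) : Prop :=
  is_basis M B /\ uniq B /\ (forall b, b \in B -> ~ reducible (rem b B) b).

End Gab.

Section Code.
Variables (F : finFieldType) (L : fieldExtType F) (n : nat).

Definition PiG (g : 'I_n -> L) : {poly L} :=
  \prod_(u : finvect_type L | (u : L) \in <<[seq g i | i <- enum 'I_n]>>%VS)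
     ('X - (u : L)%:P).

Definition mooreX (g : 'I_n -> L) : 'M[{poly L}]_(n, n.+1) :=
  \matrix_(j < n, l < n.+1)
     if insub (l : nat) is Some i then ((g i) ^+ (qq F ^ j))%:P else xq L j.

Definition mooreG (g : 'I_n -> L) : 'M[L]_n :=
  \matrix_(j < n, l < n) (g l) ^+ (qq F ^ j).

(* Lambda_{g,r}(x) ; the paper's index i (1-based) is our i+1 *)
Definition LambdaGR (g r : 'I_n -> L) : {poly L} :=
  \sum_(i < n) ((-1) ^+ (n - i.+1) * r i / \det (mooreG g)) *:
     \det (col' (widen_ord (leqnSn n) i) (mooreX g)).

Definition interpMod (g r : 'I_n -> L) (u : lpair L) : Prop :=
  exists beta gamma : {poly L}, linearized beta /\ linearized gamma /\
    u = padd (pcomp beta (PiG g, 0)) (pcomp gamma (- LambdaGR g r, 'X)).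

Definition gabidulin (g : 'I_n -> L) (k : nat) (c : 'I_n -> L) : Prop :=
  exists mp : {poly L}, linearized mp /\ (mp = 0 \/ (qdeg mp < k)%N) /\
    forall i, c i = mp.[g i].

Definition rank_dist (a b : 'I_n -> L) : nat :=
  \rank (\matrix_(i < \dim {:L}, j < n) coord (vbasis fullv) i (a j - b j)).

End Code.

(* Main.v *)
Require Import Defs.
From HB Require Import structures.
From mathcomp Require Import all_boot all_order all_algebra all_field.
From mathcomp Require Import zify fingroup perm.
Set Implicit Arguments. Unset Strict Implicit. Unset Printing Implicit Defensive.
Import Order.TTheory GRing.Theory.
Local Open Scope ring_scope.

Section Frob.
Variables (R : comNzRingType) (p : nat).
Hypothesis pcharRp : p \in [pchar R].
Lemma frobD e (x y : R) : (x + y) ^+ (p ^ e) = x ^+ (p ^ e) + y ^+ (p ^ e).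
Proof.
elim: e => [|e IH]; first by rewrite !expn0 !expr1.
by rewrite expnSr !exprM IH -!(pFrobenius_autE pcharRp) rmorphD.
Qed.
End Frob.

Section Lin.
Variables (F : finFieldType) (L : fieldExtType F).
Local Notation q := (qq F).

Lemma q_gt1 : (1 < q)%N. Proof. exact: finNzRing_gt1. Qed.
Lemma q_gt0 : (0 < q)%N. Proof. by apply: ltn_trans q_gt1. Qed.

Lemma frobL j (x y : L) : (x + y) ^+ (q ^ j) = x ^+ (q ^ j) + y ^+ (q ^ j).
Proof.
have [p _ pcharFp] := finPcharP F.
rewrite /qq (card_pprimeChar pcharFp) -expnM.
apply: frobD; by rewrite (pchar_lalg L).
Qed.

Lemma frobP j (x y : {poly L}) : (x + y) ^+ (q ^ j) = x ^+ (q ^ j) + y ^+ (q ^ j).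
Proof.
have [p _ pcharFp] := finPcharP F.
rewrite /qq (card_pprimeChar pcharFp) -expnM.
apply: frobD. apply: (rmorph_pchar (@polyC L)). by rewrite (pchar_lalg L).
Qed.

Lemma frobF j (c : F) : c ^+ (q ^ j) = c.
Proof.
elim: j => [|j IH]; first by rewrite expr1.
by rewrite expnSr exprM IH expf_card.
Qed.
End Lin.
Section Lin2.
Variables (F : finFieldType) (L : fieldExtType F).
Local Notation q := (qq F).
Local Notation lin := (@linearized F L).

Lemma lin_coef0 p : lin p -> p`_0 = 0.
Proof.
move=> lp; apply/eqP; apply: contraT => /lp [j] /esym/eqP.
by rewrite expn_eq0 (negbTE (lt0n_neq0 (q_gt0 F))).
Qed.

Lemma lin0 : lin 0.
Proof. by move=> i; rewrite coef0 eqxx. Qed.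

Lemma linD p r : lin p -> lin r -> lin (p + r).
Proof.
move=> lp lr i; rewrite coefD => nz.
have [pi0|/lp //] := eqVneq p`_i 0.
by apply: lr; move: nz; rewrite pi0 add0r.
Qed.

Lemma linZ c p : lin p -> lin (c *: p).
Proof.
move=> lp i; rewrite coefZ => nz; apply: lp; apply: contraNneq nz => ->.
by rewrite mulr0.
Qed.

Lemma linN p : lin p -> lin (- p).
Proof. by move=> lp; rewrite -scaleN1r; apply: linZ. Qed.

Lemma linB p r : lin p -> lin r -> lin (p - r).
Proof. by move=> lp lr; apply: linD => //; apply: linN. Qed.

Lemma lin_sum I (s : seq I) (P : pred I) (G : I -> {poly L}) :
  (forall i, P i -> lin (G i)) -> lin (\sum_(i <- s | P i) G i).
Proof.
move=> H; elim/big_rec: _ => [|i x Pi lx]; first exact: lin0.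
by apply: linD => //; apply: H.
Qed.

Lemma lin_mono c i : (c != 0 -> exists j, i = (q ^ j)%N) -> lin (c *: 'X^i).
Proof.
move=> H m; rewrite coefZ coefXn.
have [->|ne] := eqVneq m i; last by rewrite mulr0 eqxx.
rewrite mulr1 => nz; exact: H.
Qed.

Lemma lin_xq c j : lin (c *: xq L j).
Proof. by apply: lin_mono => _; exists j. Qed.

Lemma lin_exp p j : lin p -> lin (p ^+ (q ^ j)).
Proof.
move=> lp; rewrite -[p]coefK poly_def.
have -> : forall (s : seq 'I_(size p)) , (\sum_(i <- s) p`_i *: 'X^i) ^+ (q ^ j) =
    \sum_(i <- s) (p`_i *: 'X^i) ^+ (q ^ j).
  elim=> [|a s IH]; first by rewrite !big_nil expr0n expn_eq0 (negbTE (lt0n_neq0 (q_gt0 F))).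
  by rewrite !big_cons frobP IH.
apply: lin_sum => i _; rewrite exprZn -exprM; apply: lin_mono => nz.
have: p`_i != 0 by apply: contraNneq nz => ->; rewrite expr0n expn_eq0 (negbTE (lt0n_neq0 (q_gt0 F))).
by case/lp => a ->; exists (a + j)%N; rewrite expnD.
Qed.

Lemma lin_comp p r : lin p -> lin r -> lin (p \Po r).
Proof.
move=> lp lr; rewrite comp_polyE; apply: lin_sum => i _.
have [->|/lp [j ->]] := eqVneq p`_i 0; first by rewrite scale0r; apply: lin0.
by apply: linZ; apply: lin_exp.
Qed.

Lemma lin_hornerD p x y : lin p -> p.[x + y] = p.[x] + p.[y].
Proof.
move=> lp; rewrite !horner_coef -big_split /=; apply: eq_bigr => i _.
have [->|/lp [j ->]] := eqVneq p`_i 0; first by rewrite !mul0r addr0.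
by rewrite frobL mulrDr.
Qed.

Lemma lin_hornerZ p (c : F) x : lin p -> p.[c *: x] = c *: p.[x].
Proof.
move=> lp; rewrite !horner_coef scaler_sumr; apply: eq_bigr => i _.
have [->|/lp [j ->]] := eqVneq p`_i 0; first by rewrite !mul0r scaler0.
by rewrite exprZn frobF scalerAr.
Qed.

Lemma lin_horner0 p : lin p -> p.[0] = 0.
Proof. by move=> lp; rewrite horner_coef0 lin_coef0. Qed.

Lemma lin_hornerN p x : lin p -> p.[- x] = - p.[x].
Proof.
move=> lp; apply/eqP; rewrite -subr_eq0 opprK -lin_hornerD // addNr.
by rewrite lin_horner0.
Qed.

Lemma lin_hornerB p x y : lin p -> p.[x - y] = p.[x] - p.[y].
Proof. by move=> lp; rewrite lin_hornerD // lin_hornerN. Qed.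

Lemma lin_horner_sum p N (c : 'I_N -> F) (v : 'I_N -> L) : lin p ->
  p.[\sum_(i < N) c i *: v i] = \sum_(i < N) c i *: p.[v i].
Proof.
move=> lp; apply: (big_rec2 (fun a b => p.[a] = b)); first exact: lin_horner0.
by move=> i a b _ <-; rewrite lin_hornerD // lin_hornerZ.
Qed.

Lemma lin_span p (s : seq L) x : lin p -> x \in <<s>>%VS ->
  p.[x] \in <<map (horner p) s>>%VS.
Proof.
move=> lp xs; rewrite (@coord_span _ _ _ (in_tuple s) x xs).
rewrite lin_horner_sum //; apply: memv_suml => i _; apply: memvZ.
apply: memv_span; apply: map_f; exact: mem_nth.
Qed.

Lemma lin_span0 p (s : seq L) x : lin p -> (forall v, v \in s -> p.[v] = 0) ->
  x \in <<s>>%VS -> p.[x] = 0.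
Proof.
move=> lp H xs; rewrite (@coord_span _ _ _ (in_tuple s) x xs).
rewrite lin_horner_sum //; apply: big1 => i _; rewrite H ?scaler0 //.
exact: mem_nth.
Qed.

Lemma lin_size p : lin p -> p != 0 -> (size p).-1 = (q ^ qdeg p)%N.
Proof.
move=> lp nz; have: p`_(size p).-1 != 0 by rewrite -lead_coefE lead_coef_eq0.
by case/lp => j e; rewrite /qdeg e trunc_expnK // q_gt1.
Qed.

Lemma lin_coef_le (p : {poly L}) i : p`_(q ^ i) != 0 -> (q ^ i <= (size p).-1)%N.
Proof.
move=> nz; have : (q ^ i < size p)%N.
  by rewrite ltnNge; apply: contra nz => /leq_sizeP ->.
by case: (size p).
Qed.

Lemma qdeg_le p i : lin p -> p`_(q ^ i) != 0 -> (i <= qdeg p)%N.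
Proof.
move=> lp nz; have pnz : p != 0 by apply: contraNneq nz => ->; rewrite coef0.
by have := @lin_coef_le p i nz; rewrite lin_size // leq_exp2l // q_gt1.
Qed.

Lemma sz_comp (p r : {poly L}) : (size (p \Po r)).-1 = ((size p).-1 * (size r).-1)%N.
Proof. exact: size_comp_poly. Qed.

Definition lpv N (a : 'I_N -> L) : {poly L} := \sum_(j < N) a j *: xq L j.

Lemma lin_lpv N a : lin (@lpv N a).
Proof. by apply: lin_sum => j _; apply: lin_xq. Qed.

Lemma coef_lpv N a m : (@lpv N a)`_m = \sum_(j < N) a j * (m == q ^ j)%N%:R.
Proof. by rewrite /lpv coef_sum; apply: eq_bigr => j _; rewrite coefZ coefXn. Qed.

Lemma coef_lpv_q N a (j : 'I_N) : (@lpv N a)`_(q ^ j) = a j.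
Proof.
rewrite coef_lpv (bigD1 j) //= eqxx mulr1 big1 ?addr0 // => i ne.
rewrite eqn_exp2l ?q_gt1 //; move: ne; rewrite -(inj_eq val_inj) /= eq_sym.
by move=> /negbTE ->; rewrite mulr0.
Qed.

Lemma size_lpv N a : ((size (@lpv N a)).-1 <= q ^ N.-1)%N.
Proof.
have : (size (@lpv N a) <= (q ^ N.-1).+1)%N.
  apply/leq_sizeP => m hm; rewrite coef_lpv big1 // => j _.
  suff -> : (m == q ^ j)%N = false by rewrite mulr0.
  apply/negbTE; rewrite neq_ltn; apply/orP; right.
  apply: leq_trans hm; rewrite ltnS leq_exp2l ?q_gt1 //.
  by case: j => j /= hj; case: N hj {a} => // N; rewrite ltnS.
by case: (size _).
Qed.

Lemma horner_lpv N a x : (@lpv N a).[x] = \sum_(j < N) a j * x ^+ (q ^ j).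
Proof. by rewrite /lpv horner_sum; apply: eq_bigr => j _; rewrite hornerZ hornerXn. Qed.

Lemma lpv_neq0 N a (j : 'I_N) : a j != 0 -> @lpv N a != 0.
Proof. by move=> nz; apply: contraNneq nz => e; rewrite -coef_lpv_q e coef0. Qed.

Lemma exists_nz_row m n (K : 'M[L]_(m, n)) : K != 0 -> exists i, row i K != 0.
Proof.
move=> nz; case: (pickP (fun i => row i K != 0)) => [i hi|none]; first by exists i.
case/eqP: nz; apply/row_matrixP => i; rewrite row0.
by move: (none i) => /negbFE/eqP.
Qed.

Lemma exists_nz_entry n (v : 'rV[L]_n) : v != 0 -> exists j, v 0 j != 0.
Proof.
move=> nz; case: (pickP (fun j => v 0 j != 0)) => [j hj|none]; first by exists j.
case/eqP: nz; apply/rowP => j; rewrite mxE.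
by move: (none j) => /negbFE/eqP.
Qed.

Lemma annih (s : seq L) : exists P, [/\ lin P, P != 0,
  ((size P).-1 <= q ^ size s)%N & forall x, x \in <<s>>%VS -> P.[x] = 0].
Proof.
set d := size s.
pose A : 'M[L]_(d.+1, d) := \matrix_(j, l) s`_l ^+ (q ^ j).
have : kermx A != 0.
  rewrite kermx_eq0 /row_free; apply: contraTneq (rank_leq_col A) => ->.
  by rewrite ltnn.
case/exists_nz_row => i; set v := row i _ => nzv.
have vA : v *m A = 0 by rewrite /v -row_mul mulmx_ker row0.
case: (@exists_nz_entry _ v nzv) => j nzj.
exists (@lpv _ (fun j => v 0 j)); split.
- exact: lin_lpv.
- exact: (@lpv_neq0 _ _ j nzj).
- exact: size_lpv.
- move=> y; apply: lin_span0; first exact: lin_lpv.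
  move=> x xs; have hl : (index x s < d)%N by rewrite index_mem.
  rewrite -(nth_index 0 xs) horner_lpv.
  have := congr1 (fun M : 'M[L]_(1, d) => M 0 (Ordinal hl)) vA.
  rewrite !mxE => e; apply: (etrans _ e); apply: eq_bigr => k _; rewrite !mxE //.
Qed.

Lemma vanish_size (s : seq L) P : free s -> lin P -> P != 0 ->
  (forall v, v \in s -> P.[v] = 0) -> (q ^ size s <= (size P).-1)%N.
Proof.
move=> fs lp nz H.
pose V := <<s>>%VS.
pose rs := enum [pred u : finvect_type L | (u : L) \in V].
have := @max_poly_roots _ P rs nz.
have -> : all (root P) rs.
  apply/allP => u; rewrite /rs => uin.
  have uV : u \in V by move: uin; rewrite (@mem_enum (finvect_type L)).
  apply/rootP.
  exact: lin_span0 lp H uV.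
have -> : uniq rs by exact: enum_uniq.
have -> : size rs = (#|F| ^ \dim V)%N.
  rewrite /rs -(@cardE (finvect_type L)).
  have := card_vspace (V : {vspace finvect_type L}).
  move=> <-; exact: eq_card.
rewrite (eqP fs) /qq.
by move=> /(_ isT isT); case: (size P).
Qed.
End Lin2.

Section CodeL.
Variables (F : finFieldType) (L : fieldExtType F) (n : nat) (g : 'I_n -> L).
Local Notation q := (qq F).
Local Notation lin := (@linearized F L).
Local Notation gs := [seq g i | i <- enum 'I_n].

Lemma size_gs : size gs = n.
Proof. by rewrite size_map size_enum_ord. Qed.

Let rsV := enum [pred u : finvect_type L | (u : L) \in <<gs>>%VS].

Lemma PiG_seq : PiG g = \prod_(z <- rsV) ('X - (z : L)%:P).
Proof. by rewrite /PiG /rsV big_enum; apply: eq_bigl => u; rewrite !inE. Qed.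

Lemma PiG_root x : x \in <<gs>>%VS -> (PiG g).[x] = 0.
Proof.
move=> xV; rewrite PiG_seq; apply/rootP; rewrite root_prod_XsubC.
by rewrite (@mem_enum (finvect_type L)).
Qed.

Lemma size_PiG : free gs -> (size (PiG g)).-1 = (q ^ n)%N.
Proof.
move=> fs; rewrite PiG_seq size_prod_XsubC /=.
rewrite -(@cardE (finvect_type L)).
have := card_vspace (<<gs>>%VS : {vspace finvect_type L}).
rewrite (eqP fs) size_gs => <-; exact: eq_card.
Qed.

Lemma monic_PiG : PiG g \is monic.
Proof. by rewrite PiG_seq monic_prod_XsubC. Qed.

Lemma lin_PiG : free gs -> lin (PiG g).
Proof.
move=> fs; have [P [lP nzP szP vP]] := annih gs.
have rts : all (root P) rsV.
  apply/allP => u; rewrite /rsV => uin; apply/rootP; apply: vP.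
  by move: uin; rewrite (@mem_enum (finvect_type L)).
have ur : uniq_roots rsV by rewrite uniq_rootsE /rsV (@enum_uniq (finvect_type L)).
have [Q eQ] := uniq_roots_prod_XsubC rts ur.
rewrite -PiG_seq in eQ.
have nzPi : PiG g != 0 by apply: monic_neq0; exact: monic_PiG.
have nzQ : Q != 0 by apply: contraNneq nzP => e; rewrite eQ e mul0r.
have szQ : size Q = 1%N.
  have := size_mul nzQ nzPi; rewrite -eQ.
  have s1 := vanish_size fs lP nzP (fun v vs => vP v (memv_span vs)).
  move: szP s1; rewrite size_gs -(size_PiG fs) => szP s1.
  have sP : (size P).-1 = (size (PiG g)).-1 by apply/eqP; rewrite eqn_leq szP s1.
  have p0 : (0 < size (PiG g))%N by rewrite size_poly_gt0.
  have q0 : (0 < size Q)%N by rewrite size_poly_gt0.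
  move=> e; move: sP; rewrite e; move: p0 q0; case: (size Q) => // a; case: (size (PiG g)) => // b _ _. rewrite addnS addSn /= => h; lia.
have eQc : Q = (Q`_0)%:P by apply: size1_polyC; rewrite szQ.
have c0 : Q`_0 != 0 by apply: contraNneq nzQ => e; rewrite eQc e.
have -> : PiG g = (Q`_0)^-1 *: P.
  by rewrite eQ [X in X * _]eQc mul_polyC scalerA mulVf // scale1r.
exact: linZ.
Qed.

Lemma moore_det_neq0 : free gs -> \det (mooreG g) != 0.
Proof.
move=> fs; apply/negP => /det0P [v nzv vM].
case: (@exists_nz_entry _ _ _ v nzv) => j nzj.
set P := @lpv F L n (fun j => v 0 j).
have nzP : P != 0 := @lpv_neq0 F L n _ j nzj.
have := vanish_size fs (@lin_lpv F L n _) nzP.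
have hv : forall w, w \in gs -> P.[w] = 0.
  move=> w /mapP [l _ ->]; rewrite horner_lpv.
  have := congr1 (fun M : 'M[L]_(1, n) => M 0 l) vM.
  rewrite !mxE => e; apply: (etrans _ e); apply: eq_bigr => k _; rewrite !mxE //.
move=> /(_ hv); rewrite size_gs => h.
have := leq_trans h (@size_lpv F L n _).
rewrite leq_exp2l ?q_gt1 //; case: n j {v nzv vM nzj P nzP hv h fs} => [[]//|m _].
by rewrite ltnn.
Qed.
End CodeL.

Lemma const_det (R : comNzRingType) m (A : 'M[{poly R}]_m) :
  (forall a b, (size (A a b) <= 1)%N) -> \det A = (\det (map_mx (fun p : {poly R} => p`_0) A))%:P.
Proof.
move=> H; rewrite -det_map_mx; congr (\det _); apply/matrixP => a b.
by rewrite !mxE /=; apply: size1_polyC.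
Qed.

Section Lambda.
Variables (F : finFieldType) (L : fieldExtType F) (n' : nat).
Local Notation n := n'.+1.
Variables (g r : 'I_n -> L).
Local Notation q := (qq F).
Local Notation lin := (@linearized F L).
Local Notation gs := [seq g i | i <- enum 'I_n].
Local Notation W := (widen_ord (leqnSn n)).

Definition Gext (y : L) (l : 'I_n.+1) : L :=
  if insub (l : nat) is Some i then g i else y.

Lemma Gext_max y i : Gext y (lift (W i) ord_max) = y.
Proof.
rewrite /Gext insubF //= /bump; have := ltn_ord i; rewrite ltnS => ->.
by rewrite add1n ltnn.
Qed.

Lemma Gext_in y (l : 'I_n) : Gext y (W l) = g l.
Proof. by rewrite /Gext (_ : insub _ = Some l) // -[X in insub X]/(val l) valK. Qed.

Lemma D_eval i y : (\det (col' (W i) (mooreX g))).[y] =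
  \det (mooreG (fun c => Gext y (lift (W i) c))).
Proof.
rewrite -horner_evalE -det_map_mx; congr (\det _); apply/matrixP => a b.
rewrite !mxE /Gext; case: (insub _) => [c|] /=.
  by rewrite horner_evalE hornerC.
by rewrite horner_evalE hornerXn.
Qed.

Lemma D_other i l : l != i ->
  \det (mooreG (fun c => Gext (g l) (lift (W i) c))) = 0.
Proof.
move=> nli.
have ne : W i != W l by apply: contra nli => /eqP/(congr1 val) /= e; apply/eqP/val_inj.
have [j ej _] := unlift_some ne.
have nj : (ord_max : 'I_n) != j.
  apply: contraTneq (ltn_ord l) => ejm.
  have := congr1 val ej; rewrite -ejm /= /bump; have := ltn_ord i; rewrite ltnS => ->.
  by move=> ->; rewrite add1n ltnn.
rewrite -det_tr (determinant_alternate nj) // => c; rewrite !mxE.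
by rewrite Gext_max -ej Gext_in.
Qed.

Lemma D_self i : \det (mooreG (fun c => Gext (g i) (lift (W i) c))) =
  (-1) ^+ (odd n' (+) odd i) * \det (mooreG g).
Proof.
pose s : 'S_n := lift_perm ord_max i 1.
have -> : mooreG (fun c => Gext (g i) (lift (W i) c)) = col_perm s (mooreG g).
  apply/matrixP => a b; rewrite !mxE; congr (_ ^+ _).
  have [->|nb] := eqVneq b ord_max; first by rewrite Gext_max /s lift_perm_id.
  have nb2 : (ord_max : 'I_n) != b by rewrite eq_sym.
  have [k ek _] := unlift_some nb2.
  rewrite /s ek lift_perm_lift perm1 /Gext.
  have e : val (lift (W i) (lift ord_max k)) = val (lift i k).
    by rewrite /= [bump n' k]/bump leqNgt ltn_ord.
  by rewrite e valK.
rewrite col_permE det_mulmx det_perm odd_permV /s odd_lift_perm odd_perm1 addbF.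
by rewrite mulrC.
Qed.

Lemma Lambda_eval l : free gs -> (LambdaGR g r).[g l] = r l.
Proof.
move=> fs; have dn := moore_det_neq0 fs.
rewrite /LambdaGR horner_sum (bigD1 l) //= big1 ?addr0; last first.
  by move=> i nil; rewrite hornerZ D_eval D_other ?mulr0 // eq_sym.
rewrite hornerZ D_eval D_self.
have -> : (n - l.+1)%N = (n' - l)%N by rewrite subSS.
rewrite -signr_odd oddB; last by rewrite -ltnS.
set s := (-1) ^+ _; set d := \det _.
rewrite mulrCA !mulrA -mulrA mulVf // mulr1 -mulrA.
by rewrite /s signrMK.
Qed.

Lemma lin_D i : lin (\det (col' (W i) (mooreX g))).
Proof.
rewrite (expand_det_col _ ord_max); apply: lin_sum => a _.
rewrite mxE /mooreX mxE insubF; last first.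
  by rewrite /= /bump; have := ltn_ord i; rewrite ltnS => ->; rewrite add1n ltnn.
rewrite /cofactor const_det; last first.
  move=> a' b'; rewrite !mxE (_ : insub _ = Some (lift i b')) ?size_polyC_leq1 //.
  have e : val (lift (W i) (lift ord_max b')) = val (lift i b').
    by rewrite /= [bump n' b']/bump leqNgt ltn_ord.
  by rewrite e valK.
rewrite -[(-1) ^+ _](rmorph_sign (@polyC L)) -rmorphM mulrC mul_polyC.
exact: lin_xq.
Qed.

Lemma lin_Lambda : lin (LambdaGR g r).
Proof. by apply: lin_sum => i _; apply: linZ; apply: lin_D. Qed.
End Lambda.

Section LM.
Variables (F : finFieldType) (L : fieldExtType F) (k : nat).
Local Notation q := (qq F).
Local Notation lin := (@linearized F L).

Lemma mlt_irr mu : mlt k mu mu = false.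
Proof. by rewrite /mlt ltnn eqxx ltnn. Qed.

Lemma mlt_trans a b c : mlt k a b -> mlt k b c -> mlt k a c.
Proof.
rewrite /mlt => /orP[h1|/andP[/eqP h1 h2]] /orP[h3|/andP[/eqP h3 h4]]; apply/orP.
- by left; lia.
- by left; lia.
- by left; lia.
- by right; apply/andP; split; [apply/eqP; lia | lia].
Qed.

Let fmax := fun (mu acc : nat * nat) => if mlt k acc mu then mu else acc.

Lemma foldr_max x0 s : foldr fmax x0 s \in x0 :: s /\
  forall mu, mu \in x0 :: s -> ~~ mlt k (foldr fmax x0 s) mu.
Proof.
elim: s => [|a s [IH1 IH2]] /=.
  by split; [rewrite inE|move=> mu; rewrite inE => /eqP ->; rewrite mlt_irr].
rewrite /fmax; case: ifP => h.
  split; first by rewrite !inE eqxx orbT.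
  move=> mu; rewrite !inE => /orP[/eqP->|/orP[/eqP->|ms]]; first last.
  - apply: contraT => /negbNE h2; have := IH2 mu; rewrite inE ms orbT => /(_ isT).
    by rewrite (mlt_trans h h2).
  - by rewrite mlt_irr.
  - apply: contraT => /negbNE h2; have := IH2 x0; rewrite inE eqxx => /(_ isT).
    by rewrite (mlt_trans h h2).
split.
  by move: IH1; rewrite !inE => /orP[->|->]; rewrite ?orbT.
move=> mu; rewrite !inE => /orP[/eqP->|/orP[/eqP->|ms]].
- by apply: IH2; rewrite inE eqxx.
- by rewrite h.
- by apply: IH2; rewrite inE ms orbT.
Qed.

Lemma lm_spec (u : lpair L) : monos u != [::] ->
  lm k u \in monos u /\ forall mu, mu \in monos u -> ~~ mlt k (lm k u) mu.
Proof.
rewrite /lm; case: (monos u) => [//|a s] _ /=.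
have [H1 H2] := foldr_max a (a :: s); move: H1 H2.
set x := foldr fmax a (a :: s) => H1 H2.
change (x \in a :: s /\ forall mu, mu \in a :: s -> ~~ mlt k x mu); split.
  by move: H1; rewrite inE => /orP[/eqP->|//]; rewrite inE eqxx.
by move=> mu ms; apply: H2; rewrite inE ms orbT.
Qed.

Lemma mem_monos (u : lpair L) i j : (j == 1%N) || (j == 2%N) -> (i < size (comp_of u j))%N ->
  coef_at u (i, j) != 0 -> (i, j) \in monos u.
Proof.
move=> /orP[/eqP->|/eqP->] hi nz; rewrite /monos mem_filter nz /= mem_cat.
  by apply/orP; left; apply/mapP; exists i => //; rewrite mem_iota.
by apply/orP; right; apply/mapP; exists i => //; rewrite mem_iota.
Qed.

Lemma monos_inv (u : lpair L) mu : mu \in monos u ->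
  coef_at u mu != 0 /\ ((mu.2 == 1%N) || (mu.2 == 2%N)).
Proof.
rewrite /monos mem_filter => /andP[-> ]; rewrite mem_cat.
by move=> /orP[/mapP[i _ ->]|/mapP[i _ ->]].
Qed.

Lemma top_mono p : lin p -> p != 0 ->
  p`_(q ^ qdeg p) != 0 /\ (qdeg p < size p)%N.
Proof.
move=> lp nz; have e := lin_size lp nz; split.
  by rewrite -e -lead_coefE lead_coef_eq0.
rewrite (polySpred nz) e ltnS; apply: ltnW; apply: ltn_expl; exact: q_gt1.
Qed.

Lemma lm_nil (u : lpair L) : monos u = [::] -> lpos k u = 0%N.
Proof. by rewrite /lpos /lm => ->. Qed.

Lemma lpos1 (u : lpair L) : lin u.1 -> lin u.2 -> lpos k u = 1%N ->
  u.1 != 0 /\ (u.2 != 0 -> (qdeg u.2 + (k - 1) < qdeg u.1)%N).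
Proof.
move=> l1 l2 hp.
have nm : monos u != [::] by apply/eqP => /lm_nil; rewrite hp.
have [inm mx] := lm_spec nm.
move: inm hp; rewrite /lpos; case: (lm k u) mx => i j mx inm /= ej; subst j.
have [cz _] := monos_inv inm; move: cz; rewrite /coef_at /comp_of /= => cz.
have nz1 : u.1 != 0 by apply: contraNneq cz => ->; rewrite coef0.
have ile := qdeg_le l1 cz.
have [t1 t2] := top_mono l1 nz1.
have := mx (qdeg u.1, 1%N) (mem_monos (u := u) (j := 1%N) isT t2 t1).
rewrite /mlt /wt /= !addn0 ltnn andbF orbF -leqNgt => dle.
have ei : i = qdeg u.1 by apply/eqP; rewrite eqn_leq ile dle.
split => // nz2.
have [s1 s2] := top_mono l2 nz2.
have := mx (qdeg u.2, 2%N) (mem_monos (u := u) (j := 2%N) isT s2 s1).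
rewrite /mlt /wt /= ei => h; lia.
Qed.

Lemma lpos2 (u : lpair L) : lin u.1 -> lin u.2 -> lpos k u = 2%N ->
  u.2 != 0 /\ (u.1 != 0 -> (qdeg u.1 <= qdeg u.2 + (k - 1))%N).
Proof.
move=> l1 l2 hp.
have nm : monos u != [::] by apply/eqP => /lm_nil; rewrite hp.
have [inm mx] := lm_spec nm.
move: inm hp; rewrite /lpos; case: (lm k u) mx => i j mx inm /= ej; subst j.
have [cz _] := monos_inv inm; move: cz; rewrite /coef_at /comp_of /= => cz.
have nz2 : u.2 != 0 by apply: contraNneq cz => ->; rewrite coef0.
have ile := qdeg_le l2 cz.
have [t1 t2] := top_mono l2 nz2.
have := mx (qdeg u.2, 2%N) (mem_monos (u := u) (j := 2%N) isT t2 t1).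
rewrite /mlt /wt /= ltn_add2r ltnn andbF orbF -leqNgt => dle.
have ei : i = qdeg u.2 by apply/eqP; rewrite eqn_leq ile dle.
split => // nz1.
have [s1 s2] := top_mono l1 nz1.
have := mx (qdeg u.1, 1%N) (mem_monos (u := u) (j := 1%N) isT s2 s1).
by rewrite /mlt /wt /= !addn0 ei negb_or => /andP[]; rewrite -leqNgt.
Qed.
End LM.

Section Arith.
Local Open Scope nat_scope.
Lemma arithA (A1 A2 s1 t1 s2 t2 U1 U2 K : nat) :
  U2 <= maxn (A1 * t1) (A2 * t2) -> (A1 * t1 != A2 * t2 -> U2 = maxn (A1 * t1) (A2 * t2)) ->
  U1 <= maxn (A1 * s1) (A2 * s2) -> (A1 * s1 != A2 * s2 -> U1 = maxn (A1 * s1) (A2 * s2)) ->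
  U1 <= U2 * K -> 0 < U2 -> t1 * K < s1 -> s2 <= t2 * K -> t2 <= U2.
Proof.
move=> h1 h2 h3 h4 h5 h6 h7 h8.
have F1 : 0 < A1 -> A1 * t1 * K < A1 * s1 by move=> a; rewrite -mulnA ltn_pmul2l.
have F2 : A2 * s2 <= A2 * t2 * K by rewrite -mulnA leq_mul2l h8 orbT.
have F3 : 0 < A2 -> t2 <= A2 * t2 by move=> a; rewrite leq_pmull.
have F4 : U2 <= A1 * t1 -> U2 * K <= A1 * t1 * K by move=> a; rewrite leq_mul2r a orbT.
have F5 : A1 = 0 -> A1 * t1 = 0 /\ A1 * s1 = 0 by move=> ->.
have F6 : A2 = 0 -> A2 * t2 = 0 /\ A2 * s2 = 0 /\ A2 * t2 * K = 0 by move=> ->.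
have F7 : A1 * t1 = A2 * t2 -> A1 * t1 * K = A2 * t2 * K by move=> ->.
move: h1 h2 h3 h4 h5 F1 F2 F3 F4 F5 F6 F7.
move: (A1 * t1) (A2 * t2) (A1 * s1) (A2 * s2) (A1 * t1 * K) (A2 * t2 * K) (U2 * K) => P1 P2 Q1 Q2 P1K P2K U2K.
move=> h1 h2 h3 h4 h5 F1 F2 F3 F4 F5 F6 F7.
case: (posnP A2) => a2.
  have [e1 [e2 e3]] := F6 a2.
  case: (posnP A1) => a1; first by have [e4 e5] := F5 a1; lia.
  have := F1 a1; have := F4; have : Q1 != Q2 -> U1 = maxn Q1 Q2 by [].
  rewrite e2; case: eqP => [->|]; lia.
case: (posnP A1) => a1.
  have [e4 e5] := F5 a1; have := F3 a2; case: eqP h2 => [e|ne] h2; lia.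
have := F3 a2; have := F1 a1; case: (eqVneq P1 P2) h2 => [e|ne] h2.
  have := F7 e; case: (eqVneq Q1 Q2) h4 => [e'|ne'] h4; lia.
move: (h2 isT); lia.
Qed.
End Arith.

Section Sizes.
Variables (F : finFieldType) (L : fieldExtType F).
Local Notation q := (qq F).
Local Notation lin := (@linearized F L).

Lemma sz_pos (p : {poly L}) : lin p -> p != 0 -> (0 < (size p).-1)%N.
Proof. by move=> lp nz; rewrite lin_size // expn_gt0 q_gt0. Qed.

Lemma sz_add_le (p r : {poly L}) :
  ((size (p + r)%R).-1 <= maxn (size p).-1 (size r).-1)%N.
Proof. have := size_polyD p r; rewrite -!subn1; lia. Qed.

Lemma sz_add_eq (p r : {poly L}) : ((size r).-1 < (size p).-1)%N ->
  predn (size (p + r)) = predn (size p).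
Proof. by move=> h; rewrite size_polyDl //; move: h; rewrite -!subn1; lia. Qed.

Lemma sz_opp (p : {poly L}) : predn (size (- p)) = predn (size p).
Proof. by rewrite size_polyN. Qed.

Lemma sz_eq0 (p : {poly L}) : lin p -> predn (size p) = 0%N -> p = 0.
Proof.
move=> lp h; apply/eqP; apply: contraT => nz; have := sz_pos lp nz.
by rewrite h.
Qed.

Lemma comp_polyNl (p r : {poly L}) : (- p) \Po r = - (p \Po r).
Proof. by rewrite -[- p]sub0r comp_polyB comp_poly0 sub0r. Qed.

Lemma lin_X : lin 'X.
Proof.
move=> i; rewrite coefX; have [->|ne] := eqVneq i 1%N; first by exists 0%N; rewrite expn0.
by rewrite eqxx.
Qed.

Lemma rdiv (P : {poly L}) (N : nat) : lin P -> P \is monic ->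
  predn (size P) = (q ^ N)%N -> forall S, lin S -> exists beta rho,
  [/\ lin beta, lin rho, S = beta \Po P + rho & (size rho <= q ^ N)%N].
Proof.
move=> lP mP szP S; have [m] := ubnP (size S); elim: m S => // m IH S szS lS.
have [le|gt] := leqP (size S) (q ^ N).
  by exists 0, S; split => //; [exact: lin0|rewrite comp_poly0 add0r].
have nzS : S != 0 by rewrite -size_poly_eq0 -lt0n (leq_ltn_trans _ gt).
have ed := lin_size lS nzS.
have dN : (N <= qdeg S)%N.
  by rewrite -(leq_exp2l _ _ (q_gt1 F)) -ed -ltnS (ltn_predK gt).
set a := lead_coef S.
have a0 : a != 0 by rewrite lead_coef_eq0.
set T := (a *: xq L (qdeg S - N)) \Po P.
have lT : lin T by apply: lin_comp => //; exact: lin_xq.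
have szP1 : (1 < size P)%N.
  by rewrite (polySpred (monic_neq0 mP)) szP ltnS expn_gt0 q_gt0.
have szT : size T = size S.
  have : predn (size T) = predn (size S).
    rewrite sz_comp size_scale // size_polyXn /= szP ed -expnD subnK //.
  have : (0 < size T)%N.
    rewrite lt0n size_poly_eq0 comp_poly_eq0 // scaler_eq0 negb_or a0.
    by rewrite -size_poly_eq0 size_polyXn.
  by move=> h1 h2; rewrite (polySpred nzS) -h2 prednK.
have lcT : lead_coef T = a.
  by rewrite lead_coef_comp // lead_coefZ lead_coefXn mulr1 (monicP mP) expr1n mulr1.
have szST : (size (S - T)%R < size S)%N.
  have : (size (S - T)%R <= (size S).-1)%N.
    apply/leq_sizeP => j hj; rewrite coefB.
    have [ej|gtj] := eqVneq j (predn (size S)).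
      by rewrite ej -lead_coefE -/a -lcT lead_coefE szT subrr.
    have hj' : (size S <= j)%N by rewrite (polySpred nzS); rewrite ltn_neqAle eq_sym gtj hj.
    by rewrite !nth_default ?subrr // szT.
  by rewrite (polySpred nzS).
have [beta [rho [lb lr eS hr]]] := IH (S - T) (leq_trans szST szS) (linB lS lT).
exists (beta + a *: xq L (qdeg S - N)), rho; split => //.
- by apply: linD => //; exact: lin_xq.
- by rewrite comp_polyD -/T addrAC -eS subrK.
Qed.
End Sizes.

Section Main.
Variables (F : finFieldType) (L : fieldExtType F) (n' k : nat).
Local Notation n := n'.+1.
Variables (g r c : 'I_n -> L) (mp : {poly L}) (b1 b2 : lpair L).
Local Notation q := (qq F).
Local Notation lin := (@linearized F L).
Local Notation gs := [seq g i | i <- enum 'I_n].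
Hypotheses (fs : free gs) (lmp : lin mp) (dmp : mp = 0 \/ (qdeg mp < k)%N)
  (cmp : forall i, c i = mp.[g i])
  (mb : minimal_basis k (interpMod g r) [:: b1; b2])
  (p1 : lpos k b1 = 1%N) (p2 : lpos k b2 = 2%N).

Local Notation K := (q ^ (k - 1))%N.

Lemma sz_mp : ((size mp).-1 <= K)%N.
Proof.
case: dmp => [->|h]; first by rewrite size_poly0.
have [->|nz] := eqVneq mp 0; first by rewrite size_poly0.
by rewrite lin_size // leq_exp2l ?q_gt1 //; move: h; lia.
Qed.

Lemma gs_mem i : g i \in gs.
Proof. by apply: map_f; rewrite mem_enum. Qed.

Lemma M_props u : interpMod g r u ->
  [/\ lin u.1, lin u.2 & forall i, u.1.[g i] = - u.2.[r i]].
Proof.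
move=> [beta [gamma [lb [lg ->]]]]; rewrite /padd /pcomp /=.
rewrite comp_poly0r lin_coef0 // polyC0 add0r comp_polyXr; split => //.
- apply: linD; first by apply: lin_comp => //; exact: lin_PiG.
  by apply: lin_comp => //; apply: linN; exact: lin_Lambda.
- move=> i; rewrite hornerD !horner_comp PiG_root ?memv_span ?gs_mem //.
  by rewrite lin_horner0 // add0r hornerN Lambda_eval // lin_hornerN.
Qed.

Lemma mem_b1 : interpMod g r b1.
Proof. by case: mb => [[H _] _]; apply: H; rewrite mem_head. Qed.
Lemma mem_b2 : interpMod g r b2.
Proof. by case: mb => [[H _] _]; apply: H; rewrite !inE eqxx orbT. Qed.

Lemma sz_b1 : ((size b1.2).-1 * K < (size b1.1).-1)%N.
Proof.
have [l1 l2 _] := M_props mem_b1.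
have [nz1 h] := lpos1 l1 l2 p1.
have [->|nz2] := eqVneq b1.2 0; first by rewrite size_poly0 mul0n sz_pos.
by rewrite !lin_size // -expnD ltn_exp2l ?q_gt1 // h.
Qed.

Lemma sz_b2 : ((size b2.1).-1 <= (size b2.2).-1 * K)%N.
Proof.
have [l1 l2 _] := M_props mem_b2.
have [nz2 h] := lpos2 l1 l2 p2.
have [->|nz1] := eqVneq b2.1 0; first by rewrite size_poly0.
by rewrite !lin_size // -expnD leq_exp2l ?q_gt1 // h.
Qed.

Local Notation vb := (vbasis (fullv : {vspace L})).
Local Notation Amat := (\matrix_(i < \dim {:L}, j < n) coord vb i (c j - r j)).
Local Notation ws := [seq \sum_(i < \dim {:L}) col_base Amat i s *: vb`_i
   | s <- enum 'I_(\rank Amat)].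

Lemma size_ws : size ws = rank_dist c r.
Proof. by rewrite size_map size_enum_ord. Qed.

Lemma err_span j : c j - r j \in <<ws>>%VS.
Proof.
rewrite (coord_vbasis (memvf (c j - r j))).
have e : forall i, coord vb i (c j - r j) =
    \sum_s col_base Amat i s * row_base Amat s j.
  move=> i; have := congr1 (fun M : 'M[F]_(\dim {:L}, n) => M i j) (mulmx_base Amat).
  by rewrite !mxE => <-.
under eq_bigr do rewrite e scaler_suml.
rewrite exchange_big /=; apply: memv_suml => s _.
have -> : \sum_i (col_base Amat i s * row_base Amat s j) *: vb`_i =
    row_base Amat s j *: \sum_i col_base Amat i s *: vb`_i.
  by rewrite scaler_sumr; apply: eq_bigr => i _; rewrite mulrC scalerA.
by apply: memvZ; apply: memv_span; apply: map_f; rewrite mem_enum.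
Qed.

Lemma sz_sum2 (x y : {poly L}) :
  ((size (x + y)%R).-1 <= maxn (size x).-1 (size y).-1)%N /\
  ((size x).-1 != (size y).-1 -> (size (x + y)%R).-1 = maxn (size x).-1 (size y).-1).
Proof.
split; first exact: sz_add_le.
case: (ltngtP (size x).-1 (size y).-1) => // h _.
  by rewrite addrC sz_add_eq // (maxn_idPr (ltnW h)).
by rewrite sz_add_eq // (maxn_idPl (ltnW h)).
Qed.

Lemma partA : (qdeg b2.2 <= rank_dist c r)%N /\
  (wdeg k b2 <= rank_dist c r + (k - 1))%N.
Proof.
have [E [lE nzE szE vE]] := annih ws.
rewrite size_ws in szE.
set S := E \Po (- LambdaGR g r).
have lS : lin S by apply: lin_comp => //; apply: linN; exact: lin_Lambda.
have [beta [rho [lb lr eS hr]]] :=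
  rdiv (lin_PiG fs) (monic_PiG g) (size_PiG fs) lS.
have Mu : interpMod g r (rho, E).
  exists (- beta), E; split; first exact: linN. split; first exact: lE.
  rewrite /padd /pcomp /= comp_poly0r lin_coef0 ?polyC0 ?add0r ?comp_polyXr; last exact: linN.
  by rewrite comp_polyNl -/S eS addKr.
case: mb => [[_ [Hsp _]] _].
have [a [sa [la ua]]] := Hsp _ Mu.
case: a sa la ua => [|a1 [|a2 [|? ?]]] //= _ la ua.
have e1 := congr1 fst ua; have e2 := congr1 snd ua; rewrite /= addr0 in e1; rewrite /= addr0 in e2.
have [l11 l12 _] := M_props mem_b1.
have [l21 l22 _] := M_props mem_b2.
have [nz22 hb2] := lpos2 l21 l22 p2.
have h5 : ((size rho).-1 <= (size E).-1 * K)%N.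
  set Z := rho + (E \Po mp).
  have lZ : lin Z by rewrite /Z; apply: linD => //; apply: lin_comp.
  have vZ : forall v, v \in gs -> Z.[v] = 0.
    move=> v /mapP [i _ ->].
    have erho : rho = S - (beta \Po PiG g) by rewrite eS [beta \Po _ + rho]addrC addrK.
    rewrite /Z hornerD erho hornerD hornerN !horner_comp PiG_root ?memv_span ?gs_mem //.
    rewrite lin_horner0 // subr0 hornerN Lambda_eval // -cmp -lin_hornerD //.
    by rewrite addrC vE // err_span.
  have [Z0|nzZ] := eqVneq Z 0.
    have : rho = - (E \Po mp) by apply/eqP; rewrite -addr_eq0 -/Z Z0.
    move=> ->; rewrite sz_opp sz_comp leq_mul2l sz_mp orbT //.
  have := vanish_size fs lZ nzZ vZ; rewrite size_gs => hZ.
  have := sz_add_le rho (E \Po mp); rewrite -/Z sz_comp => hm.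
  have qp : (0 < q ^ n)%N by rewrite expn_gt0 q_gt0.
  have hr' : ((size rho).-1 < q ^ n)%N by move: hr qp; rewrite -subn1; lia.
  have : ((size rho).-1 < (size E).-1 * (size mp).-1)%N.
    by move: hZ hm hr'; lia.
  move=> h; apply: ltnW; apply: (leq_trans h); rewrite leq_mul2l sz_mp orbT //.
have [h1 h2] := sz_sum2 (a1 \Po b1.2) (a2 \Po b2.2).
have [h3 h4] := sz_sum2 (a1 \Po b1.1) (a2 \Po b2.1).
rewrite !sz_comp -e2 in h1 h2; rewrite !sz_comp -e1 in h3 h4.
have t2le := arithA h1 h2 h3 h4 h5 (sz_pos lE nzE) sz_b1 sz_b2.
have hq : (qdeg b2.2 <= rank_dist c r)%N.
  rewrite -(leq_exp2l _ _ (q_gt1 F)) -lin_size //; apply: (leq_trans t2le).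
  exact: szE.
split => //.
rewrite /wdeg (negbTE nz22); have [//|nz21] := eqVneq b2.1 0.
  by rewrite leq_add2r.
by rewrite geq_max leq_add2r hq andbT (leq_trans (hb2 nz21)) // leq_add2r.
Qed.

Lemma partB : wdeg k b1 = qdeg b1.1 /\ (n - rank_dist c r <= wdeg k b1)%N.
Proof.
have [l11 l12 ev1] := M_props mem_b1.
have [nz11 hd1] := lpos1 l11 l12 p1.
have ew : wdeg k b1 = qdeg b1.1.
  rewrite /wdeg; have [//|nz12] := eqVneq b1.2 0.
  by rewrite (negbTE nz11) (maxn_idPl (ltnW (hd1 nz12))).
split => //; rewrite ew.
set gam := b1.2.
have [E [lE nzE szE vE]] := annih [seq gam.[w] | w <- ws].
rewrite size_map size_ws in szE.
set h := b1.1 + (gam \Po mp).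
have lh : lin h by rewrite /h; apply: linD => //; apply: lin_comp.
have szh : (size h).-1 = (size b1.1).-1.
  apply: sz_add_eq; rewrite sz_comp; apply: leq_ltn_trans sz_b1.
  by rewrite leq_mul2l sz_mp orbT.
set Z := E \Po h.
have lZ : lin Z by rewrite /Z; apply: lin_comp.
have szZ : (size Z).-1 = ((size E).-1 * (size b1.1).-1)%N by rewrite sz_comp szh.
have nzZ : Z != 0.
  apply/negP => /eqP Z0; have : (0 < (size Z).-1)%N by rewrite szZ muln_gt0 !sz_pos.
  by rewrite Z0 size_poly0.
have vZ : forall v, v \in gs -> Z.[v] = 0.
  move=> v /mapP [i _ ->]; rewrite horner_comp; apply: vE.
  rewrite /h hornerD ev1 horner_comp -cmp -/gam addrC -lin_hornerB //.
  exact: lin_span (err_span i).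
have := vanish_size fs lZ nzZ vZ; rewrite size_gs szZ.
rewrite (lin_size l11 nz11) => hn.
have : (q ^ n <= q ^ (rank_dist c r + qdeg b1.1))%N.
  by rewrite expnD; apply: (leq_trans hn); rewrite leq_mul2r szE orbT.
by rewrite leq_exp2l ?q_gt1 // => h'; rewrite leq_subLR.
Qed.
End Main.

Unset Implicit Arguments.
Theorem lemma32 (F : finFieldType) (L : fieldExtType F) (n k : nat)
  (g r : 'I_n -> L) (t : nat) (b1 b2 : lpair L) :
  (1 <= k)%N -> (k <= n)%N ->
  free [seq g i | i <- enum 'I_n] ->
  (exists2 c, gabidulin g k c & rank_dist c r = t) ->
  (forall c, gabidulin g k c -> (t <= rank_dist c r)%N) ->
  minimal_basis k (interpMod g r) [:: b1; b2] ->
  lpos k b1 = 1%N -> lpos k b2 = 2%N ->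
  [/\ (wdeg k b2 <= t + (k - 1))%N,
      (qdeg b2.2 <= t)%N,
      wdeg k b1 = qdeg b1.1
    & (n - t <= wdeg k b1)%N].
Proof.
move=> k1 kn fs [c gab rc] _ mb p1 p2.
move: g r c fs gab rc mb kn; case: n => [|n'].
  by move=> g r c fs gab rc mb kn; move: kn k1; rewrite leqn0 => /eqP->.
move=> g r c fs gab rc mb kn.
case: gab => mp [lmp [dmp cmp]].
have [hA1 hA2] := partA fs lmp dmp cmp mb p1 p2.
have [hB1 hB2] := partB fs lmp dmp cmp mb p1 p2.
by rewrite -rc; split.
Qed.
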